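(* Let $G=G_1+\dots+G_n$ be a disjunctive sum of dicotic nonzugzwang scoring games, each with all terminal positions numbers. Let $m_i=m(G_i)$ and $\sigma=\max_{1\leq i\leq n}\sigma(G_i)$. Then $$\sum_{i=1}^n m_i-\sigma\leq Rs(G)\leq \sum_{i=1}^n m_i\leq Ls(G)\leq\sum_{i=1}^n m_i+\sigma.$$
   Context: A scoring game is $G=\langle G^L\mid G^R\rangle$ with $G^L,G^R$ finite nonempty sets of scoring games or empty sets decorated with a real, $\emptyset^s$; $\langle\emptyset^s\mid\emptyset^s\rangle$ is the number $s$. $Ls(\langle\emptyset^s\mid G^R\rangle)=s$, $Rs(\langle G^L\mid\emptyset^s\rangle)=s$, otherwise $Ls(G)=\max_{G^l\in G^L}Rs(G^l)$, $Rs(G)=\min_{G^r\in G^R}Ls(G^r)$. Disjunctive sum: Left options of $G_1+G_2$ are all $G_1^l+G_2$, $G_1+G_2^l$ (Left side $\emptyset^{\ell_1+\ell_2}$ if neither has Left options), symmetrically for Right; $H+c$ adds the number $c$ to all terminal scores; $nG$ is the sum of $n$ copies. Dicotic: at every position both players have options or neither; nonzugzwang: $Ls(H)\ge Rs(H)$ at every position. Mean: $m(G)=\lim_{n\to\infty}Ls(nG)/n=\lim_{n\to\infty}Rs(nG)/n$ (exists for dicotic nonzugzwang games). Cooling: if $G$ is a number $k$, $G_t=k$, $\sigma(G)=0$; otherwise $\widetilde G_t=\langle \{G^l_t-t\}\mid \{G^r_t+t\}\rangle$, $t_0=\min\{t\ge0: Ls(\widetilde G_t)=Rs(\widetilde G_t)\}$,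 $G_t=\widetilde G_t$ for $t\le t_0$ and the number $Ls(\widetilde G_{t_0})$ for $t>t_0$; $\sigma(G)=t_0$ is the temperature. *)

(* Defs.v *)
From mathcomp Require Import all_boot all_order all_algebra.
From mathcomp Require Import all_classical all_reals all_analysis.
Set Implicit Arguments. Unset Strict Implicit. Unset Printing Implicit Defensive.
Import Order.TTheory GRing.Theory Num.Theory numFieldNormedType.Exports.
Local Open Scope ring_scope.
Local Open Scope classical_set_scope.

Section ScoringGames.
Variable R : realType.

(* A scoring game  < G^L | G^R >.  [Gm L l Rr r]: the Left option list L and
   the Right option list Rr.  When L = [::] the Left side is the decorated
   empty set  emptyset^l ; when L <> [::] the decoration l is irrelevant
   (never read).  Likewise for the Right side. *)
Inductive game : Type := Gm of seq game & R & seq game & R.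

Definition leftopts (G : game) := let: Gm L _ _ _ := G in L.
Definition rightopts (G : game) := let: Gm _ _ Rr _ := G in Rr.

Definition gnum (s : R) : game := Gm [::] s [::] s.

Definition is_num (G : game) : bool :=
  let: Gm L l Rr r := G in nilp L && nilp Rr && (l == r).

Fixpoint LRs (G : game) : R * R :=
  let: Gm L l Rr r := G in
  (match L with
   | [::] => l
   | g :: t => foldr (fun h acc => Num.max (LRs h).2 acc) (LRs g).2 t
   end,
   match Rr with
   | [::] => r
   | g :: t => foldr (fun h acc => Num.min (LRs h).1 acc) (LRs g).1 t
   end).

Definition Ls (G : game) : R := (LRs G).1.
Definition Rs (G : game) : R := (LRs G).2.

Fixpoint gsum (G1 G2 : game) {struct G1} : game :=
  let fix aux (G2 : game) : game :=
    let: Gm L1 l1 R1 r1 := G1 in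
    let: Gm L2 l2 R2 r2 := G2 in
    Gm ([seq gsum g G2 | g <- L1] ++ [seq aux g | g <- L2]) (l1 + l2)
       ([seq gsum g G2 | g <- R1] ++ [seq aux g | g <- R2]) (r1 + r2)
  in aux G2.

Fixpoint shift (c : R) (G : game) : game :=
  let: Gm L l Rr r := G in
  Gm [seq shift c g | g <- L] (l + c) [seq shift c g | g <- Rr] (r + c).

Fixpoint gmul (n : nat) (G : game) : game :=
  match n with
  | 0 => gnum 0
  | n'.+1 => if n' is 0 then G else gsum G (gmul n' G)
  end.

Fixpoint sum_games (Gs : seq game) : game :=
  match Gs with
  | [::] => gnum 0
  | [:: g] => g
  | g :: t => gsum g (sum_games t)
  end.

Fixpoint every_position (P : game -> Prop) (G : game) : Prop :=
  let: Gm L l Rr r := G in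
  P G /\ foldr (fun g acc => every_position P g /\ acc) True L
      /\ foldr (fun g acc => every_position P g /\ acc) True Rr.

Definition dicotic (G : game) : Prop :=
  every_position (fun H => nilp (leftopts H) = nilp (rightopts H)) G.

Definition nonzugzwang (G : game) : Prop :=
  every_position (fun H => Rs H <= Ls H) G.

Definition terminal_numbers (G : game) : Prop :=
  every_position (fun H => nilp (leftopts H) && nilp (rightopts H) -> is_num H) G.

Definition mean (G : game) : R := limn (fun n : nat => Ls (gmul n G) / n%:R).

(* cooling: returns (t |-> G_t, sigma(G)).
   t0 = min { t >= 0 | Ls(~G_t) = Rs(~G_t) }, taken as the infimum. *)
Fixpoint coolp (G : game) : (R -> game) * R :=
  let: Gm L l Rr r := G in
  if is_num G then (fun _ => gnum l, 0) else
  let tilde := fun t : R =>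
    Gm [seq shift (- t) ((coolp g).1 t) | g <- L] l
       [seq shift t ((coolp g).1 t) | g <- Rr] r in
  let t0 := inf [set t : R | 0 <= t /\ Ls (tilde t) = Rs (tilde t)] in
  (fun t => if t <= t0 then tilde t else gnum (Ls (tilde t0)), t0).

Definition cool (G : game) (t : R) : game := (coolp G).1 t.
Definition temperature (G : game) : R := (coolp G).2.

End ScoringGames.

(* Main.v *)
Require Import Defs.
From mathcomp Require Import all_boot all_order all_algebra.
From mathcomp Require Import all_classical all_reals all_analysis.
From mathcomp Require Import lra zify.
Import Order.TTheory GRing.Theory Num.Theory.
Local Open Scope ring_scope.
Set Implicit Arguments. Unset Strict Implicit. Unset Printing Implicit Defensive.

Section Basics.
Variable R : realType.
Notation game := (game R).

Fixpoint memp (x : game) (s : seq game) : Prop :=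
  match s with [::] => False | y :: t => y = x \/ memp x t end.

Lemma memp_map (f : game -> game) x s : memp x (map f s) -> exists y, memp y s /\ x = f y.
Proof.
elim: s => //= y s IH [<-|/IH [z [H1 H2]]]; first by exists y; split; [left|].
by exists z; split; [right|].
Qed.

Lemma memp_mapI (f : game -> game) y s : memp y s -> memp (f y) (map f s).
Proof. by elim: s => //= z s IH [->|/IH]; [left|right]. Qed.

Lemma memp_cat x s1 s2 : memp x (s1 ++ s2) <-> memp x s1 \/ memp x s2.
Proof.
elim: s1 => /= [|y s IH]; first by split=> [H|[//|H]]; [right|].
rewrite IH; tauto.
Qed.

Fixpoint gsize (G : game) : nat :=
  let: Gm L _ Rr _ := G in (sumn [seq gsize g | g <- L] + sumn [seq gsize g | g <- Rr]).+1.

Lemma sumn_memp s x : memp x s -> (gsize x <= sumn [seq gsize g | g <- s])%N.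
Proof.
elim: s => //= y s IH [<-|/IH]; first by rewrite leq_addr.
by move=> H; rewrite (leq_trans H) // leq_addl.
Qed.

Lemma gsize_L G g : memp g (leftopts G) -> (gsize g < gsize G)%N.
Proof. case: G => L l Rr r /= /sumn_memp H; rewrite ltnS; exact: leq_trans H (leq_addr _ _). Qed.

Lemma gsize_R G g : memp g (rightopts G) -> (gsize g < gsize G)%N.
Proof. case: G => L l Rr r /= /sumn_memp H; rewrite ltnS; exact: leq_trans H (leq_addl _ _). Qed.

Lemma foldr_ep (P : game -> Prop) s :
  foldr (fun g acc => every_position P g /\ acc) True s <-> (forall g, memp g s -> every_position P g).
Proof.
elim: s => /= [|y s IH]; first by split=> // _ g [].
rewrite IH; split=> [[H1 H2] g [<-|/H2]//|H]; split; [by apply: H; left|move=> g Hg; by apply: H; right].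
Qed.

Lemma epE (P : game -> Prop) G : every_position P G <->
  P G /\ (forall g, memp g (leftopts G) -> every_position P g)
      /\ (forall g, memp g (rightopts G) -> every_position P g).
Proof. by case: G => L l Rr r /=; rewrite !foldr_ep. Qed.

Lemma LsE (L Rr : seq game) (l r : R) : Ls (Gm L l Rr r) =
  match L with [::] => l | g :: t => foldr (fun h acc => Num.max (Rs h) acc) (Rs g) t end.
Proof. by []. Qed.
Lemma RsE (L Rr : seq game) (l r : R) : Rs (Gm L l Rr r) =
  match Rr with [::] => r | g :: t => foldr (fun h acc => Num.min (Ls h) acc) (Ls g) t end.
Proof. by []. Qed.

Lemma foldr_max_ge (F : game -> R) g t h : memp h (g :: t) ->
  F h <= foldr (fun h acc => Num.max (F h) acc) (F g) t.
Proof.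
elim: t h => [|y t IH] h /=; first by case=> // ->.
rewrite le_max; case=> [E|[->|H]]; first by rewrite (IH h) ?orbT //; left.
  by rewrite lexx.
by rewrite (IH h) ?orbT //; right.
Qed.

Lemma foldr_max_ex (F : game -> R) g t : exists h, memp h (g :: t) /\
  foldr (fun h acc => Num.max (F h) acc) (F g) t = F h.
Proof.
elim: t => [|y t [h [Hh E]]] /=; first by exists g; split; [left|].
rewrite E; case: (leP (F y) (F h)) => H.
  by exists h; split; [case: Hh; [left|right; right]|].
by exists y; split; [right; left|].
Qed.

Lemma foldr_min_le (F : game -> R) g t h : memp h (g :: t) ->
  foldr (fun h acc => Num.min (F h) acc) (F g) t <= F h.
Proof.
elim: t h => [|y t IH] h /=; first by case=> // ->.
rewrite ge_min; case=> [E|[->|H]]; first by rewrite (IH h) ?orbT //; left.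
  by rewrite lexx.
by rewrite (IH h) ?orbT //; right.
Qed.

Lemma foldr_min_ex (F : game -> R) g t : exists h, memp h (g :: t) /\
  foldr (fun h acc => Num.min (F h) acc) (F g) t = F h.
Proof.
elim: t => [|y t [h [Hh E]]] /=; first by exists g; split; [left|].
rewrite E; case: (leP (F y) (F h)) => H.
  by exists y; split; [right; left|].
by exists h; split; [case: Hh; [left|right; right]|].
Qed.

Lemma Ls_ge G g : memp g (leftopts G) -> Rs g <= Ls G.
Proof. case: G => [[|g0 L] l Rr r] //= H; rewrite /Ls /=; exact (foldr_max_ge (@Rs R) H). Qed.

Lemma Ls_ex G : leftopts G <> [::] -> exists g, memp g (leftopts G) /\ Ls G = Rs g.
Proof. case: G => [[|g0 L] l Rr r] //= _; rewrite /Ls /=; exact (foldr_max_ex (@Rs R) _ _). Qed.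

Lemma Ls_nil (L Rr : seq game) (l r : R) : L = [::] -> Ls (Gm L l Rr r) = l.
Proof. by move->. Qed.

Lemma Rs_le G g : memp g (rightopts G) -> Rs G <= Ls g.
Proof. case: G => [L l [|g0 Rr] r] //= H; rewrite /Rs /=; exact (foldr_min_le (@Ls R) H). Qed.

Lemma Rs_ex G : rightopts G <> [::] -> exists g, memp g (rightopts G) /\ Rs G = Ls g.
Proof. case: G => [L l [|g0 Rr] r] //= _; rewrite /Rs /=; exact (foldr_min_ex (@Ls R) _ _). Qed.

Lemma Rs_nil (L Rr : seq game) (l r : R) : Rr = [::] -> Rs (Gm L l Rr r) = r.
Proof. by move->. Qed.

Lemma Ls_char G x : (leftopts G = [::] -> Ls G = x) ->
  (forall g, memp g (leftopts G) -> Rs g <= x) ->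
  (leftopts G <> [::] -> exists g, memp g (leftopts G) /\ x <= Rs g) -> Ls G = x.
Proof.
move=> H0 H1 H2; case E: (leftopts G) => [|g t]; first exact: H0 E.
have NE : leftopts G <> [::] by rewrite E.
have [h [Hh EL]] := Ls_ex NE.
have [k [Hk Hx]] := H2 NE.
apply/eqP; rewrite eq_le; apply/andP; split; first by rewrite EL; exact: H1.
exact: le_trans Hx (Ls_ge Hk).
Qed.

Lemma Rs_char G x : (rightopts G = [::] -> Rs G = x) ->
  (forall g, memp g (rightopts G) -> x <= Ls g) ->
  (rightopts G <> [::] -> exists g, memp g (rightopts G) /\ Ls g <= x) -> Rs G = x.
Proof.
move=> H0 H1 H2; case E: (rightopts G) => [|g t]; first exact: H0 E.
have NE : rightopts G <> [::] by rewrite E.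
have [h [Hh EL]] := Rs_ex NE.
have [k [Hk Hx]] := H2 NE.
apply/eqP; rewrite eq_le; apply/andP; split; last by rewrite EL; exact: H1.
exact: le_trans (Rs_le Hk) Hx.
Qed.

End Basics.

Section Shift.
Variable R : realType.
Notation game := (game R).
Implicit Types (G g : game) (c : R).
Local Notation shift := (@Defs.shift R).

Lemma game_ind_size (P : game -> Prop) :
  (forall G, (forall g, memp g (leftopts G) -> P g) -> (forall g, memp g (rightopts G) -> P g) -> P G) ->
  forall G, P G.
Proof.
move=> H G; have [n Hn] : exists n, (gsize G <= n)%N by exists (gsize G).
elim: n G Hn => [|n IH] G Hn; first by case: G Hn.
apply: H => g Hg; apply: IH; rewrite -ltnS; apply: leq_trans Hn.
  exact: gsize_L. exact: gsize_R.
Qed.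

Lemma leftopts_shift c G : leftopts (shift c G) = map (shift c) (leftopts G).
Proof. by case: G. Qed.
Lemma rightopts_shift c G : rightopts (shift c G) = map (shift c) (rightopts G).
Proof. by case: G. Qed.

Lemma LRs_shift c G : Ls (shift c G) = Ls G + c /\ Rs (shift c G) = Rs G + c.
Proof.
elim/game_ind_size: G => G IHL IHR; split.
- apply: Ls_char; rewrite leftopts_shift.
  + by case: G IHL IHR => [[|? ?] l Rr r] //= _ _ _.
  + move=> g /memp_map [h [Hh ->]]; rewrite (proj2 (IHL h Hh)) lerD2r; exact: Ls_ge.
  + case E: (leftopts G) => [|g0 t] // _.
    have NE : leftopts G <> [::] by rewrite E.
    have [h [Hh Eh]] := Ls_ex NE.
    exists (shift c h); split; first by rewrite -E; exact: memp_mapI.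
    by rewrite (proj2 (IHL h Hh)) Eh.
- apply: Rs_char; rewrite rightopts_shift.
  + by case: G IHL IHR => [L l [|? ?] r] //= _ _ _.
  + move=> g /memp_map [h [Hh ->]]; rewrite (proj1 (IHR h Hh)) lerD2r; exact: Rs_le.
  + case E: (rightopts G) => [|g0 t] // _.
    have NE : rightopts G <> [::] by rewrite E.
    have [h [Hh Eh]] := Rs_ex NE.
    exists (shift c h); split; first by rewrite -E; exact: memp_mapI.
    by rewrite (proj1 (IHR h Hh)) Eh.
Qed.

Lemma Ls_shift c G : Ls (shift c G) = Ls G + c. Proof. exact: proj1 (LRs_shift c G). Qed.
Lemma Rs_shift c G : Rs (shift c G) = Rs G + c. Proof. exact: proj2 (LRs_shift c G). Qed.

Definition DN (G : game) := dicotic G /\ nonzugzwang G /\ terminal_numbers G.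

Lemma DNE G : DN G <->
  [/\ (nilp (leftopts G) = nilp (rightopts G)), Rs G <= Ls G,
      (nilp (leftopts G) && nilp (rightopts G) -> is_num G),
      (forall g, memp g (leftopts G) -> DN g) & (forall g, memp g (rightopts G) -> DN g)].
Proof.
rewrite /DN /dicotic /nonzugzwang /terminal_numbers !epE; split.
  move=> [[a [b c]] [[d [e f]] [g [h i]]]]; split => // x Hx.
    by split; [apply: b|split; [apply: e|apply: h]].
  by split; [apply: c|split; [apply: f|apply: i]].
move=> [a b c d e]; split; [|split]; (split; [done|split]) => x Hx.
all: by [ have [? [? ?]] := d x Hx | have [? [? ?]] := e x Hx ].
Qed.

Lemma DN_L G g : DN G -> memp g (leftopts G) -> DN g.
Proof. by move/DNE=> [_ _ _ H _]; apply: H. Qed.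
Lemma DN_R G g : DN G -> memp g (rightopts G) -> DN g.
Proof. by move/DNE=> [_ _ _ _ H]; apply: H. Qed.
Lemma DN_nz G : DN G -> Rs G <= Ls G.
Proof. by move/DNE=> []. Qed.
Lemma DN_dic G : DN G -> (leftopts G = [::] <-> rightopts G = [::]).
Proof.
move/DNE=> [H _ _ _ _]; case: (leftopts G) (rightopts G) H => [|? ?] [|? ?] //= _; by split.
Qed.
Lemma DN_termL G : DN G -> leftopts G = [::] -> G = gnum (Ls G).
Proof.
move=> H HL; have HR : rightopts G = [::] by apply/(DN_dic H).
move/DNE: H => [_ _ H _ _]; move: H HL HR; case: G => L l Rr r /= H HL HR; subst L Rr.
by move: (H isT) => /= /eqP ->.
Qed.
Lemma DN_termR G : DN G -> rightopts G = [::] -> G = gnum (Ls G).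
Proof. by move=> H HR; apply: DN_termL => //; apply/(DN_dic H). Qed.

Lemma DN_shift c G : DN G -> DN (shift c G).
Proof.
elim/game_ind_size: G => G IHL IHR /DNE [a b d e f]; apply/DNE; split.
- by rewrite leftopts_shift rightopts_shift /nilp !size_map.
- by rewrite Ls_shift Rs_shift lerD2r.
- move: d; case: G {IHL IHR a b e f} => L l Rr r /=; rewrite /nilp !size_map => d H.
  by move: (d H) => /andP [-> /eqP ->]; rewrite eqxx.
- by rewrite leftopts_shift => g /memp_map [h [Hh ->]]; apply: IHL => //; apply: e.
- by rewrite rightopts_shift => g /memp_map [h [Hh ->]]; apply: IHR => //; apply: f.
Qed.


End Shift.

Section Sums.
Variable R : realType.
Notation game := (game R).
Implicit Types (G g A B x y : game) (c a : R) (Xs Ys : seq game).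
Local Notation shift := (@Defs.shift R).

Lemma eq_map_memp (f g : game -> game) s : (forall x, memp x s -> f x = g x) -> map f s = map g s.
Proof.
elim: s => //= y s IH H; rewrite (H y); last by left.
by rewrite IH // => x Hx; apply: H; right.
Qed.

Lemma gsumE L1 l1 R1 r1 L2 l2 R2 r2 :
  gsum (Gm L1 l1 R1 r1) (Gm L2 l2 R2 r2) =
  Gm ([seq gsum g (Gm L2 l2 R2 r2) | g <- L1] ++ [seq gsum (Gm L1 l1 R1 r1) g | g <- L2]) (l1 + l2)
     ([seq gsum g (Gm L2 l2 R2 r2) | g <- R1] ++ [seq gsum (Gm L1 l1 R1 r1) g | g <- R2]) (r1 + r2).
Proof. by []. Qed.

Lemma leftopts_gsum A B : leftopts (gsum A B) = [seq gsum g B | g <- leftopts A] ++ [seq gsum A g | g <- leftopts B].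
Proof. by case: A => ? ? ? ?; case: B. Qed.
Lemma rightopts_gsum A B : rightopts (gsum A B) = [seq gsum g B | g <- rightopts A] ++ [seq gsum A g | g <- rightopts B].
Proof. by case: A => ? ? ? ?; case: B. Qed.

Lemma gsum_gnum a B : gsum (gnum a) B = shift a B.
Proof.
elim/game_ind_size: B => B IHL IHR; case: B IHL IHR => L l Rr r IHL IHR.
rewrite /gnum gsumE /= (addrC a l) (addrC a r); congr Gm; apply: eq_map_memp => x Hx.
  by rewrite -IHL.
by rewrite -IHR.
Qed.

Lemma gsum_shift c A B : gsum (shift c A) B = shift c (gsum A B).
Proof.
elim/game_ind_size: A B => A IHLA IHRA B.
elim/game_ind_size: B => B IHLB IHRB.
case: A IHLA IHRA IHLB IHRB => LA la RA ra; case: B => LB lb RB rb IHLA IHRA IHLB IHRB.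
rewrite [shift c (Gm LA la RA ra)]/= !gsumE /= !map_cat -!map_comp (addrAC la c lb) (addrAC ra c rb); congr Gm; congr cat;
  apply: eq_map_memp => x Hx /=.
- by rewrite IHLA.
- by rewrite -IHLB.
- by rewrite IHRA.
- by rewrite -IHRB.
Qed.

Lemma Ls_gsum_term A B : leftopts A = [::] -> leftopts B = [::] -> Ls (gsum A B) = Ls A + Ls B.
Proof. by case: A => [[|? ?] ? ? ?] //; case: B => [[|? ?] ? ? ?]. Qed.
Lemma Rs_gsum_term A B : rightopts A = [::] -> rightopts B = [::] -> Rs (gsum A B) = Rs A + Rs B.
Proof. by case: A => [? ? [|? ?] ?] //; case: B => [? ? [|? ?] ?]. Qed.

Definition LsL Xs := Ls (sum_games Xs).
Definition RsL Xs := Rs (sum_games Xs).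

Lemma sum_cons2 x y t : sum_games (x :: y :: t) = gsum x (sum_games (y :: t)).
Proof. by []. Qed.

Lemma LRsL_shift c x Q : LsL (shift c x :: Q) = LsL (x :: Q) + c /\ RsL (shift c x :: Q) = RsL (x :: Q) + c.
Proof.
rewrite /LsL /RsL; case: Q => [|y t]; first exact: LRs_shift.
by rewrite !sum_cons2 gsum_shift; exact: LRs_shift.
Qed.

Lemma LRsL_gnum a Q : LsL (gnum a :: Q) = LsL Q + a /\ RsL (gnum a :: Q) = RsL Q + a.
Proof.
rewrite /LsL /RsL; case: Q => [|y t]; first by rewrite /= add0r.
by rewrite !sum_cons2 gsum_gnum; exact: LRs_shift.
Qed.

Inductive step (o : game -> seq game) : seq game -> seq game -> Prop :=
| step_here x x' t : memp x' (o x) -> step o (x :: t) (x' :: t)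
| step_there x t t' : step o t t' -> step o (x :: t) (x :: t').

Lemma step_cons o Xs Ys : step o Xs Ys -> exists y t, Ys = y :: t.
Proof. by case=> [x x' t _|x t t' _]; do 2 eexists. Qed.

Lemma step_nil o Ys : ~ step o [::] Ys.
Proof. by move=> H; inversion H. Qed.

Definition optsum (o : game -> seq game) :=
  (forall A B, o (gsum A B) = [seq gsum g B | g <- o A] ++ [seq gsum A g | g <- o B])
  /\ o (gnum 0) = [::].

Lemma optsum_L : optsum (@leftopts R).
Proof. by split; [exact: leftopts_gsum|]. Qed.
Lemma optsum_R : optsum (@rightopts R).
Proof. by split; [exact: rightopts_gsum|]. Qed.

Lemma opts_sum o : optsum o -> forall Xs Y,
  memp Y (o (sum_games Xs)) <-> exists Ys, step o Xs Ys /\ Y = sum_games Ys.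
Proof.
move=> [Ho Ho0]; elim=> [|x [|y t] IH] Y.
- rewrite /= Ho0; split=> // [[Ys [/step_nil]]] //.
- split=> [H|[Ys [H ->]]]; first by exists [:: Y]; split=> //; apply: step_here.
  inversion H as [a b c Hc|a b c Hc]; subst => //; case: (step_nil Hc).
- rewrite sum_cons2 Ho memp_cat; split.
  + case=> [/memp_map [g [Hg ->]]|/memp_map [g [Hg ->]]].
      by exists (g :: y :: t); split=> //; apply: step_here.
    have [Ys [HYs ->]] := (IH g).1 Hg.
    have [y' [t' E]] := step_cons HYs; subst Ys.
    by exists (x :: y' :: t'); split=> //; apply: step_there.
  + case=> Ys [H ->]; inversion H as [a b c Hc|a b c Hc]; subst.
      by left; apply: memp_mapI.
    have [y' [t' E]] := step_cons Hc; subst c.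
    right; rewrite sum_cons2; apply: memp_mapI; apply/IH; by exists (y' :: t').
Qed.

Lemma step_dec o Xs : (forall x, memp x Xs -> o x = [::]) \/ exists Ys, step o Xs Ys.
Proof.
elim: Xs => [|x t [IH|[Ys HY]]]; first by left.
- case E: (o x) => [|x' s].
    by left=> z [<-|/IH].
  by right; exists (x' :: t); apply: step_here; rewrite E; left.
- by right; exists (x :: Ys); apply: step_there.
Qed.

Lemma step_term o Xs Ys : (forall x, memp x Xs -> o x = [::]) -> ~ step o Xs Ys.
Proof.
move=> H S; elim: S H => [x x' t Hx H|x t t' _ IH H].
  by rewrite (H x) in Hx; [|left].
by apply: IH => z Hz; apply: H; right.
Qed.

Lemma sumL_term Xs : (forall x, memp x Xs -> leftopts x = [::]) -> LsL Xs = \sum_(x <- Xs) Ls x.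
Proof.
rewrite /LsL; elim: Xs => [|x [|y t] IH] H; first by rewrite big_nil.
  by rewrite big_seq1.
rewrite sum_cons2 big_cons Ls_gsum_term; first by rewrite IH // => z Hz; apply: H; right.
  by apply: H; left.
case E: (leftopts (sum_games (y :: t))) => [//|g s].
have : memp g (leftopts (sum_games (y :: t))) by rewrite E; left.
by move/(opts_sum optsum_L) => [Ys [S _]]; exfalso; apply: (step_term _ S) => z Hz; apply: H; right.
Qed.

Lemma sumR_term Xs : (forall x, memp x Xs -> rightopts x = [::]) -> RsL Xs = \sum_(x <- Xs) Rs x.
Proof.
rewrite /RsL; elim: Xs => [|x [|y t] IH] H; first by rewrite big_nil.
  by rewrite big_seq1.
rewrite sum_cons2 big_cons Rs_gsum_term; first by rewrite IH // => z Hz; apply: H; right.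
  by apply: H; left.
case E: (rightopts (sum_games (y :: t))) => [//|g s].
have : memp g (rightopts (sum_games (y :: t))) by rewrite E; left.
by move/(opts_sum optsum_R) => [Ys [S _]]; exfalso; apply: (step_term _ S) => z Hz; apply: H; right.
Qed.

Lemma LsL_ge Xs Ys : step (@leftopts R) Xs Ys -> RsL Ys <= LsL Xs.
Proof. move=> S; apply: Ls_ge; apply/(opts_sum optsum_L); by exists Ys. Qed.
Lemma RsL_le Xs Ys : step (@rightopts R) Xs Ys -> RsL Xs <= LsL Ys.
Proof. move=> S; apply: Rs_le; apply/(opts_sum optsum_R); by exists Ys. Qed.

Lemma LsL_ex Xs Ys0 : step (@leftopts R) Xs Ys0 -> exists Ys, step (@leftopts R) Xs Ys /\ LsL Xs = RsL Ys.
Proof.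
move=> S.
have NE : leftopts (sum_games Xs) <> [::].
  have : memp (sum_games Ys0) (leftopts (sum_games Xs)) by apply/(opts_sum optsum_L); exists Ys0.
  by case: (leftopts _).
have [g [Hg E]] := Ls_ex NE.
have [Ys [S' Eg]] := (opts_sum optsum_L _ _).1 Hg.
by exists Ys; split => //; rewrite /LsL /RsL E Eg.
Qed.
Lemma RsL_ex Xs Ys0 : step (@rightopts R) Xs Ys0 -> exists Ys, step (@rightopts R) Xs Ys /\ RsL Xs = LsL Ys.
Proof.
move=> S.
have NE : rightopts (sum_games Xs) <> [::].
  have : memp (sum_games Ys0) (rightopts (sum_games Xs)) by apply/(opts_sum optsum_R); exists Ys0.
  by case: (rightopts _).
have [g [Hg E]] := Rs_ex NE.
have [Ys [S' Eg]] := (opts_sum optsum_R _ _).1 Hg.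
by exists Ys; split => //; rewrite /LsL /RsL E Eg.
Qed.

End Sums.

Section Perm.
Variable R : realType.
Notation game := (game R).
Implicit Types (G g A B x y : game) (c a : R) (Xs Ys P Q : seq game).
Local Notation shift := (@Defs.shift R).

Definition lsize Xs := sumn [seq gsize g | g <- Xs].

Lemma step_lsize o : (forall x x', memp x' (o x) -> (gsize x' < gsize x)%N) ->
  forall Xs Ys, step o Xs Ys -> (lsize Ys < lsize Xs)%N.
Proof.
move=> Ho Xs Ys; elim=> [x x' t H|x t t' _ IH]; rewrite /lsize /=.
  by rewrite ltn_add2r; apply: Ho.
by rewrite ltn_add2l.
Qed.

Lemma stepL_lsize Xs Ys : step (@leftopts R) Xs Ys -> (lsize Ys < lsize Xs)%N.
Proof. by apply: step_lsize => x x'; apply: gsize_L. Qed.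
Lemma stepR_lsize Xs Ys : step (@rightopts R) Xs Ys -> (lsize Ys < lsize Xs)%N.
Proof. by apply: step_lsize => x x'; apply: gsize_R. Qed.

Lemma lsize_cat P Q : lsize (P ++ Q) = (lsize P + lsize Q)%N.
Proof. by rewrite /lsize map_cat sumn_cat. Qed.

Inductive gperm : seq game -> seq game -> Prop :=
| gperm_nil : gperm [::] [::]
| gperm_skip x l l' : gperm l l' -> gperm (x :: l) (x :: l')
| gperm_swap x y l : gperm (y :: x :: l) (x :: y :: l)
| gperm_trans l l' l'' : gperm l l' -> gperm l' l'' -> gperm l l''.

Lemma gperm_refl Xs : gperm Xs Xs.
Proof. by elim: Xs => [|x t IH]; [apply: gperm_nil|apply: gperm_skip]. Qed.

Lemma gperm_sym Xs Ys : gperm Xs Ys -> gperm Ys Xs.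
Proof.
elim=> [|x l l' _ IH|x y l|l l' l'' _ IH1 _ IH2].
- exact: gperm_nil.
- exact: gperm_skip.
- exact: gperm_swap.
- exact: gperm_trans IH2 IH1.
Qed.

Lemma gperm_mid P x Q : gperm (P ++ x :: Q) (x :: P ++ Q).
Proof.
elim: P => [|y P IH] /=; first exact: gperm_refl.
apply: gperm_trans (gperm_skip y IH) _; exact: gperm_swap.
Qed.

Lemma gperm_catC P Q : gperm (P ++ Q) (Q ++ P).
Proof.
elim: P => [|x P IH] /=; first by rewrite cats0; exact: gperm_refl.
apply: gperm_trans (gperm_skip x IH) _; apply: gperm_sym; exact: gperm_mid.
Qed.

Lemma gperm_memp Xs Ys x : gperm Xs Ys -> memp x Xs -> memp x Ys.
Proof.
move=> H; elim: H x => [//|y l l' _ IH|y z l|l l' l'' _ IH1 _ IH2] x /=.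
- by case=> [->|/IH]; [left|right].
- by case=> [->|[->|H]]; [right; left|left|right; right].
- by move/IH1/IH2.
Qed.

Lemma gperm_lsize Xs Ys : gperm Xs Ys -> lsize Xs = lsize Ys.
Proof.
rewrite /lsize; elim=> [//|x l l' _ IH|x y l|l l' l'' _ IH1 _ IH2] /=.
- by rewrite IH.
- by rewrite addnCA.
- by rewrite IH1.
Qed.

Lemma gperm_big (F : game -> R) Xs Ys : gperm Xs Ys -> \sum_(x <- Xs) F x = \sum_(x <- Ys) F x.
Proof.
elim=> [//|x l l' _ IH|x y l|l l' l'' _ IH1 _ IH2].
- by rewrite !big_cons IH.
- by rewrite !big_cons addrCA.
- by rewrite IH1.
Qed.

Lemma gperm_step o Xs Xs2 Ys : gperm Xs Xs2 -> step o Xs Ys -> exists Ys2, step o Xs2 Ys2 /\ gperm Ys Ys2.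
Proof.
move=> H; elim: H Ys => [|x l l' Hp IH|x y l|l l' l'' _ IH1 _ IH2] Ys S.
- by case: (step_nil S).
- inversion S as [a b c Hc|a b c Hc]; subst.
    by exists (b :: l'); split; [apply: step_here|apply: gperm_skip].
  have [Y2 [S2 P2]] := IH _ Hc.
  by exists (x :: Y2); split; [apply: step_there|apply: gperm_skip].
- inversion S as [a b c Hc|a b c Hc]; subst.
    by exists (x :: b :: l); split; [apply: step_there; apply: step_here|apply: gperm_swap].
  inversion Hc as [a' b' c' Hc'|a' b' c' Hc']; subst.
    by exists (b' :: y :: l); split; [apply: step_here|apply: gperm_swap].
  by exists (x :: y :: c'); split; [do 2 apply: step_there|apply: gperm_swap].
- have [Y1 [S1 P1]] := IH1 _ S.
  have [Y2 [S2 P2]] := IH2 _ S1.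
  by exists Y2; split => //; apply: gperm_trans P1 P2.
Qed.

Lemma LRs_perm Xs Ys : gperm Xs Ys -> LsL Xs = LsL Ys /\ RsL Xs = RsL Ys.
Proof.
have [n Hn] : exists n, (lsize Xs < n)%N by exists (lsize Xs).+1.
elim: n Xs Ys Hn => [//|n IH] Xs Ys Hn HP.
have le_dir : forall (A B : seq game), (lsize A < n.+1)%N -> gperm A B -> LsL A <= LsL B /\ RsL B <= RsL A.
  move=> A B HA HAB; split.
  - case: (step_dec (@leftopts R) A) => [HT|[A0 S0]].
      have HT' : forall x, memp x B -> leftopts x = [::].
        by move=> x Hx; apply: HT; apply: gperm_memp Hx; apply: gperm_sym.
      by rewrite (sumL_term HT) (sumL_term HT') (gperm_big _ HAB).
    have [A' [S' E]] := LsL_ex S0.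
    have [B' [SB PB]] := gperm_step HAB S'.
    rewrite E (proj2 (IH _ _ _ PB)); first exact: LsL_ge.
    by apply: leq_trans (stepL_lsize S') _.
  - case: (step_dec (@rightopts R) A) => [HT|[A0 S0]].
      have HT' : forall x, memp x B -> rightopts x = [::].
        by move=> x Hx; apply: HT; apply: gperm_memp Hx; apply: gperm_sym.
      by rewrite (sumR_term HT) (sumR_term HT') (gperm_big _ HAB).
    have [A' [S' E]] := RsL_ex S0.
    have [B' [SB PB]] := gperm_step HAB S'.
    rewrite E (proj1 (IH _ _ _ PB)); first exact: RsL_le.
    by apply: leq_trans (stepR_lsize S') _.
have [H1 H2] := le_dir _ _ Hn HP.
have [H3 H4] := le_dir Ys Xs ltac:(by rewrite -(gperm_lsize HP)) (gperm_sym HP).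
by split; apply/eqP; rewrite eq_le ?H1 ?H3 ?H2 ?H4.
Qed.


End Perm.

Section Ineq.
Variable R : realType.
Notation game := (game R).
Implicit Types (G g A B x y : game) (c a : R) (Xs Ys P Q : seq game).
Local Notation shift := (@Defs.shift R).

Lemma step_decomp o Xs Ys : step o Xs Ys ->
  exists P x x' Q, [/\ Xs = P ++ x :: Q, Ys = P ++ x' :: Q & memp x' (o x)].
Proof.
elim=> [x x' t H|x t t' _ [P [y [y' [Q [E1 E2 H]]]]]].
  by exists [::], x, x', t.
by exists (x :: P), y, y', Q; rewrite E1 E2.
Qed.

Lemma step_mid o P x x' Q : memp x' (o x) -> step o (P ++ x :: Q) (P ++ x' :: Q).
Proof. by move=> H; elim: P => [|y P IH] /=; [apply: step_here|apply: step_there]. Qed.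

Lemma step_cat_inv o P Q Y : step o (P ++ Q) Y ->
  (exists P', step o P P' /\ Y = P' ++ Q) \/ (exists Q', step o Q Q' /\ Y = P ++ Q').
Proof.
elim: P Y => [|x P IH] Y /= S; first by right; exists Y.
inversion S as [a b c Hc|a b c Hc]; subst.
  by left; exists (b :: P); split => //; apply: step_here.
case: (IH _ Hc) => [[P' [S' ->]]|[Q' [S' ->]]].
  by left; exists (x :: P'); split => //; apply: step_there.
by right; exists Q'.
Qed.

Lemma step_catl o P P' Q : step o P P' -> step o (P ++ Q) (P' ++ Q).
Proof. by elim=> [x x' t H|x t t' _ IH] /=; [apply: step_here|apply: step_there]. Qed.
Lemma step_catr o P Q Q' : step o Q Q' -> step o (P ++ Q) (P ++ Q').
Proof. by elim: P => [|x P IH] //= S; apply: step_there; apply: IH. Qed.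

Definition allDN Xs := forall x, memp x Xs -> DN x.

Lemma allDN_cat P Q : allDN (P ++ Q) <-> allDN P /\ allDN Q.
Proof.
split=> [H|[H1 H2] x /memp_cat [/H1|/H2] //]; split=> x Hx; apply: H; apply/memp_cat; tauto.
Qed.

Lemma allDN_cons x Q : allDN (x :: Q) <-> DN x /\ allDN Q.
Proof.
split=> [H|[H1 H2] z [<-|/H2] //]; split; first by apply: H; left.
by move=> z Hz; apply: H; right.
Qed.

Lemma allDN_stepL Xs Ys : allDN Xs -> step (@leftopts R) Xs Ys -> allDN Ys.
Proof.
move=> H S; elim: S H => [x x' t Hx|x t t' _ IH] /allDN_cons [H1 H2]; apply/allDN_cons.
  by split => //; apply: DN_L Hx.
by split => //; apply: IH.
Qed.
Lemma allDN_stepR Xs Ys : allDN Xs -> step (@rightopts R) Xs Ys -> allDN Ys.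
Proof.
move=> H S; elim: S H => [x x' t Hx|x t t' _ IH] /allDN_cons [H1 H2]; apply/allDN_cons.
  by split => //; apply: DN_R Hx.
by split => //; apply: IH.
Qed.

Definition termL Xs := forall x, memp x Xs -> leftopts x = [::].
Definition termR Xs := forall x, memp x Xs -> rightopts x = [::].

Lemma termLR Xs : allDN Xs -> termL Xs -> termR Xs.
Proof. by move=> H HT x Hx; apply/(DN_dic (H x Hx)); apply: HT. Qed.
Lemma termRL Xs : allDN Xs -> termR Xs -> termL Xs.
Proof. by move=> H HT x Hx; apply/(DN_dic (H x Hx)); apply: HT. Qed.

Lemma term_prefix P Q : allDN P -> termL P ->
  LsL (P ++ Q) = LsL P + LsL Q /\ RsL (P ++ Q) = RsL P + RsL Q.
Proof.
elim: P => [|x P IH] HD HT /=.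
  by rewrite /LsL /RsL /= !add0r.
have [Dx DP] := (allDN_cons x P).1 HD.
have E := DN_termL Dx (HT x (or_introl erefl)).
have [IH1 IH2] := IH DP (fun z Hz => HT z (or_intror Hz)).
rewrite E !(proj1 (LRsL_gnum _ _)) !(proj2 (LRsL_gnum _ _)) IH1 IH2.
by split; rewrite addrAC.
Qed.

Lemma eq_big_memp (F G : game -> R) s : (forall x, memp x s -> F x = G x) ->
  \sum_(x <- s) F x = \sum_(x <- s) G x.
Proof.
elim: s => [|y s IH] H; first by rewrite !big_nil.
rewrite !big_cons (H y (or_introl erefl)) IH // => x Hx; exact: H (or_intror Hx).
Qed.

Lemma term_eq Xs : allDN Xs -> termL Xs -> LsL Xs = RsL Xs.
Proof.
move=> HD HT; rewrite (sumL_term HT) (sumR_term (termLR HD HT)).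
apply: eq_big_memp => x Hx; have E := DN_termL (HD x Hx) (HT x Hx).
by rewrite {2}E.
Qed.

Definition Jprop P Q := [/\ LsL P + RsL Q <= LsL (P ++ Q), RsL P + RsL Q <= RsL (P ++ Q),
  RsL (P ++ Q) <= RsL P + LsL Q & LsL (P ++ Q) <= LsL P + LsL Q].

Lemma termL_catl P Q : termL (P ++ Q) -> termL P.
Proof. by move=> H x Hx; apply: H; apply/memp_cat; left. Qed.
Lemma termR_catl P Q : termR (P ++ Q) -> termR P.
Proof. by move=> H x Hx; apply: H; apply/memp_cat; left. Qed.

Lemma J_all n : (forall P Q, (lsize P + lsize Q < n)%N -> allDN P -> allDN Q -> Jprop P Q) /\
  (forall Q, (lsize Q < n)%N -> allDN Q -> RsL Q <= LsL Q).
Proof.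
elim: n => [|n [IHJ IHNZ]]; first by split.
have NZ : forall Q, (lsize Q < n.+1)%N -> allDN Q -> RsL Q <= LsL Q.
  move=> Q HQ DQ; case: (step_dec (@leftopts R) Q) => [HT|[Y0 S0]].
    by rewrite (term_eq DQ HT).
  have [P0 [q [q' [Q0 [EQ _ Hq']]]]] := step_decomp S0.
  set rest := P0 ++ Q0.
  have PQ : gperm Q (q :: rest) by rewrite EQ; exact: gperm_mid.
  have [DQ1 DQ2] := (allDN_cons q rest).1 (fun x Hx => DQ x (gperm_memp (gperm_sym PQ) Hx)).
  have Hsz : (lsize (q :: rest) <= n)%N by rewrite -(gperm_lsize PQ).
  rewrite (proj1 (LRs_perm PQ)) (proj2 (LRs_perm PQ)).
  have NEr : rightopts q <> [::].
    by move/(DN_dic DQ1); move: Hq'; case: (leftopts q).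
  have [q'' [Hq'' Eq'']] := Rs_ex NEr.
  have a : RsL (q :: rest) <= Rs q + LsL rest.
    apply: le_trans (RsL_le (step_here rest Hq'')) _.
    have s1 : (lsize [:: q''] + lsize rest < n)%N.
      move: Hsz (gsize_R Hq''); rewrite /lsize /=; lia.
    have d1 : allDN [:: q''] by move=> x [<-|//]; apply: DN_R Hq''.
    have [_ _ _ J4] := IHJ [:: q''] rest s1 d1 DQ2.
    by rewrite Eq''; exact: J4.
  have b : Rs q + LsL rest <= LsL (q :: rest).
    case: (step_dec (@leftopts R) rest) => [HT|[r0 Sr0]].
      have PP : gperm (q :: rest) (rest ++ [:: q]) by exact: (gperm_catC [:: q] rest).
      rewrite (proj1 (LRs_perm PP)) (proj1 (term_prefix _ DQ2 HT)).
      have := DN_nz DQ1; rewrite /LsL /=; lra.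
    have [r' [Sr' Er']] := LsL_ex Sr0.
    apply: le_trans (LsL_ge (step_there q Sr')); rewrite Er'.
    have s1 : (lsize [:: q] + lsize r' < n)%N.
      move: Hsz (stepL_lsize Sr'); rewrite /lsize /=; lia.
    have d1 : allDN [:: q] by move=> x [<-|//].
    have [_ J2 _ _] := IHJ [:: q] r' s1 d1 (allDN_stepL DQ2 Sr').
    exact: J2.
  exact: le_trans a b.
split=> // P Q HPQ DP DQ.
have DPQ : allDN (P ++ Q) by apply/allDN_cat.
have NZQ : RsL Q <= LsL Q by apply: NZ => //; move: HPQ; lia.
have NZP : RsL P <= LsL P by apply: NZ => //; move: HPQ; lia.
have szL : forall P', step (@leftopts R) P P' -> (lsize P' + lsize Q < n)%N.
  by move=> P' S; move: HPQ (stepL_lsize S); lia.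
have szR : forall P', step (@rightopts R) P P' -> (lsize P' + lsize Q < n)%N.
  by move=> P' S; move: HPQ (stepR_lsize S); lia.
have szL' : forall Q', step (@leftopts R) Q Q' -> (lsize Q' + lsize P < n)%N.
  by move=> Q' S; move: HPQ (stepL_lsize S); lia.
have szR' : forall Q', step (@rightopts R) Q Q' -> (lsize Q' + lsize P < n)%N.
  by move=> Q' S; move: HPQ (stepR_lsize S); lia.
split.
- case: (step_dec (@leftopts R) P) => [HT|[P0 S0]].
    rewrite (proj1 (term_prefix _ DP HT)); lra.
  have [P' [S' E]] := LsL_ex S0.
  apply: le_trans (LsL_ge (step_catl Q S')); rewrite E.
  by have [_ J2 _ _] := IHJ P' Q (szL _ S') (allDN_stepL DP S') DQ.
- case: (step_dec (@rightopts R) (P ++ Q)) => [HT|[Y0 S0]].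
    by rewrite (proj2 (term_prefix _ DP (termRL DP (termR_catl HT)))).
  have [Y [S E]] := RsL_ex S0; rewrite E.
  case: (step_cat_inv S) => [[P' [S' ->]]|[Q' [S' ->]]].
    have [J1 _ _ _] := IHJ P' Q (szR _ S') (allDN_stepR DP S') DQ.
    have := RsL_le S'; lra.
  rewrite (proj1 (LRs_perm (gperm_catC P Q'))).
  have [J1 _ _ _] := IHJ Q' P (szR' _ S') (allDN_stepR DQ S') DP.
  have := RsL_le S'; lra.
- case: (step_dec (@rightopts R) P) => [HT|[P0 S0]].
    rewrite (proj2 (term_prefix _ DP (termRL DP HT))); lra.
  have [P' [S' E]] := RsL_ex S0.
  apply: le_trans (RsL_le (step_catl Q S')) _; rewrite E.
  by have [_ _ _ J4] := IHJ P' Q (szR _ S') (allDN_stepR DP S') DQ.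
- case: (step_dec (@leftopts R) (P ++ Q)) => [HT|[Y0 S0]].
    by rewrite (proj1 (term_prefix _ DP (termL_catl HT))).
  have [Y [S E]] := LsL_ex S0; rewrite E.
  case: (step_cat_inv S) => [[P' [S' ->]]|[Q' [S' ->]]].
    have [_ _ J3 _] := IHJ P' Q (szL _ S') (allDN_stepL DP S') DQ.
    have := LsL_ge S'; lra.
  rewrite (proj2 (LRs_perm (gperm_catC P Q'))).
  have [_ _ J3 _] := IHJ Q' P (szL' _ S') (allDN_stepL DQ S') DP.
  have := LsL_ge S'; lra.
Qed.

Lemma J P Q : allDN P -> allDN Q -> Jprop P Q.
Proof. by move=> DP DQ; apply: (proj1 (J_all (lsize P + lsize Q).+1)). Qed.

Lemma NZL Q : allDN Q -> RsL Q <= LsL Q.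
Proof. by move=> DQ; apply: (proj2 (J_all (lsize Q).+1)). Qed.

End Ineq.

Section Cool1.
Variable R : realType.
Notation game := (game R).
Implicit Types (G g A B x y : game) (c a s t : R).
Local Notation shift := (@Defs.shift R).

Definition tilde G t : game := let: Gm L l Rr r := G in
  Gm [seq shift (- t) (cool g t) | g <- L] l [seq shift t (cool g t) | g <- Rr] r.
Definition t0 G := inf [set t : R | 0 <= t /\ Ls (tilde G t) = Rs (tilde G t)].
Definition cval G := if is_num G then Ls G else Ls (tilde G (t0 G)).

Lemma is_numE G : is_num G -> G = gnum (Ls G).
Proof. by case: G => L l Rr r /= /andP [/andP [/nilP -> /nilP ->] /eqP ->]. Qed.

Lemma coolE G t : cool G t =
  if is_num G then G else if t <= t0 G then tilde G t else gnum (cval G).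
Proof.
rewrite /cval; case: G => L l Rr r; rewrite /cool /t0 /tilde.
case E: (is_num (Gm L l Rr r)); have E' := E; move: E; rewrite /= => ->; last by [].
by move: E' => /andP [/andP [/nilP -> /nilP ->] /eqP ->].
Qed.

Lemma tempE G : temperature G = if is_num G then 0 else t0 G.
Proof. by case: G => L l Rr r; rewrite /temperature /=; case: ifP. Qed.

Lemma leftopts_tilde G t : leftopts (tilde G t) = [seq shift (- t) (cool g t) | g <- leftopts G].
Proof. by case: G. Qed.
Lemma rightopts_tilde G t : rightopts (tilde G t) = [seq shift t (cool g t) | g <- rightopts G].
Proof. by case: G. Qed.

Lemma A_ge G t g : memp g (leftopts G) -> Rs (cool g t) - t <= Ls (tilde G t).
Proof.
move=> H; rewrite -Rs_shift; apply: Ls_ge; rewrite leftopts_tilde.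
exact: (memp_mapI (fun g => shift (- t) (cool g t))).
Qed.
Lemma A_ex G t : leftopts G <> [::] -> exists g, memp g (leftopts G) /\ Ls (tilde G t) = Rs (cool g t) - t.
Proof.
move=> NE; have NE' : leftopts (tilde G t) <> [::] by rewrite leftopts_tilde; case: (leftopts G) NE.
have [h [Hh ->]] := Ls_ex NE'; move: Hh; rewrite leftopts_tilde => /memp_map [g [Hg ->]].
by exists g; rewrite Rs_shift.
Qed.
Lemma B_le G t g : memp g (rightopts G) -> Rs (tilde G t) <= Ls (cool g t) + t.
Proof.
move=> H; rewrite -Ls_shift; apply: Rs_le; rewrite rightopts_tilde.
exact: (memp_mapI (fun g => shift t (cool g t))).
Qed.
Lemma B_ex G t : rightopts G <> [::] -> exists g, memp g (rightopts G) /\ Rs (tilde G t) = Ls (cool g t) + t.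
Proof.
move=> NE; have NE' : rightopts (tilde G t) <> [::] by rewrite rightopts_tilde; case: (rightopts G) NE.
have [h [Hh ->]] := Rs_ex NE'; move: Hh; rewrite rightopts_tilde => /memp_map [g [Hg ->]].
by exists g; rewrite Ls_shift.
Qed.

Lemma freeze G : exists T, forall t, T <= t -> cool G t = gnum (cval G).
Proof.
case E: (is_num G).
  by exists 0 => t _; rewrite coolE E /cval E {1}(is_numE E).
exists (t0 G + 1) => t Ht; rewrite coolE E ifF //; apply/negbTE; rewrite -ltNge.
by apply: lt_le_trans Ht; rewrite ltrDl.
Qed.

Lemma freeze_list (s : seq game) : exists T, 0 <= T /\
  forall g, memp g s -> forall t, T <= t -> cool g t = gnum (cval g).
Proof.
elim: s => [|g s [T [HT0 HT]]]; first by exists 0.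
have [T1 H1] := freeze g.
exists (Num.max T (Num.max T1 0)); split; first by rewrite le_max HT0.
move=> h [<-|Hh] t Ht.
  by apply: H1; apply: le_trans Ht; rewrite le_max le_max lexx !orbT.
by apply: HT => //; apply: le_trans Ht; rewrite le_max lexx.
Qed.

Lemma DN_gnum a : DN (gnum a).
Proof. by apply/DNE; split => //=; rewrite eqxx. Qed.

End Cool1.

Section Thresh.
Local Open Scope classical_set_scope.
Variable R : realType.

Lemma inf_facts (E : set R) : (forall t, E t -> 0 <= t) -> (exists t, E t) ->
  [/\ 0 <= inf E, (forall e, E e -> inf E <= e) &
      (forall eps, 0 < eps -> exists2 e, E e & e < inf E + eps)].
Proof.
move=> H0 [x Ex].
have lb : has_lbound E by exists 0 => y /H0.
have hi : has_inf E by split; [exists x|].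
split.
- by apply: lb_le_inf; [exists x|move=> y /H0].
- by move=> e Ee; apply: ge_inf.
- by move=> eps Heps; apply: inf_adherent.
Qed.

Lemma threshold (f g : R -> R) :
  (forall s t : R, 0 <= s -> s <= t -> f t - g t <= f s - g s) ->
  (forall s t : R, 0 <= s -> s <= t -> f s - g s - 2 * (t - s) <= f t - g t) ->
  0 <= f 0 - g 0 -> (exists t1 : R, 0 <= t1 /\ f t1 - g t1 < 0) ->
  let t0 := inf [set t | 0 <= t /\ f t = g t] in 0 <= t0 /\ f t0 = g t0.
Proof.
move=> mono lip D0 [t1 [Ht1 Dt1]].
pose D t := f t - g t.
pose N := [set t : R | 0 <= t /\ D t <= 0].
have [Ns0 Nle Nadh] := @inf_facts N (fun t (H : N t) => proj1 H) (ex_intro _ t1 (conj Ht1 (ltW Dt1))).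
set s := inf N in Ns0 Nle Nadh.
have Ds1 : D s <= 0.
  case: (ltP 0 (D s)) => // Hpos.
  have [e [He0 HeD] Hes] := Nadh (D s / 4) ltac:(by apply: divr_gt0).
  have se := Nle e (conj He0 HeD).
  have := lip s e Ns0 se; unfold D in *; lra.
have Ds2 : 0 <= D s.
  case: (ltP (D s) 0) => // Hneg; exfalso.
  pose eps := - D s / 4.
  case: (lerP s eps) => Hse.
    have := lip 0 s (lexx 0) Ns0; unfold eps in *; unfold D in *; lra.
  have Ht : 0 <= s - eps by unfold eps in *; lra.
  have HtN : ~ N (s - eps).
    move=> /Nle; unfold eps in *; lra.
  have HDt : 0 < D (s - eps).
    by case: (ltP 0 (D (s - eps))) => // Hle; exfalso; apply: HtN.
  have := lip (s - eps) s Ht ltac:(unfold eps in *; lra).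
  unfold eps in *; unfold D in *; lra.
have Zs : [set t | 0 <= t /\ f t = g t] s.
  by split => //; apply/eqP; rewrite -subr_eq0 eq_le; apply/andP.
have [Z0 Zle Zadh] := @inf_facts [set t | 0 <= t /\ f t = g t] (fun t (H : 0 <= t /\ f t = g t) => proj1 H) (ex_intro _ s Zs).
move=> t0; split => //.
have Dt0a : 0 <= D t0.
  have := mono t0 s Z0 (Zle s Zs); unfold D in *; lra.
have Dt0b : D t0 <= 0.
  case: (ltP 0 (D t0)) => // Hpos.
  have [e [He0 HeE] Hes] := Zadh (D t0 / 4) ltac:(by apply: divr_gt0).
  have := lip t0 e Z0 (Zle e (conj He0 HeE)); unfold D in *; lra.
by apply/eqP; rewrite -subr_eq0 eq_le; apply/andP.
Qed.

End Thresh.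

Section Cool2.
Variable R : realType.
Notation game := (game R).
Implicit Types (G g A B x y : game) (c a s t : R).
Local Notation shift := (@Defs.shift R).

Definition Q2prop G := forall s t, 0 <= s -> s <= t ->
  [/\ Ls (cool G t) <= Ls (cool G s), Ls (cool G s) <= Ls (cool G t) + (t - s),
      Rs (cool G s) <= Rs (cool G t) & Rs (cool G t) <= Rs (cool G s) + (t - s)].

Definition Kprop G := forall t, t0 G <= t ->
  (forall g, memp g (leftopts G) -> Rs (cool g t) - t <= cval G) /\
  (forall g, memp g (rightopts G) -> cval G <= Ls (cool g t) + t).

Definition Qgood G := [/\ forall t, 0 <= t -> DN (cool G t), Q2prop G,
  Ls (cool G 0) = Ls G /\ Rs (cool G 0) = Rs G, 0 <= temperature G &
  (forall t, temperature G <= t -> Ls (cool G t) = cval G /\ Rs (cool G t) = cval G) /\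
  (~~ is_num G -> Kprop G)].

Lemma Qgood_num G : is_num G -> Qgood G.
Proof.
move=> HN; have EG := is_numE HN.
have CE : forall t, cool G t = G by move=> t; rewrite coolE HN.
have RL : Rs G = Ls G by rewrite EG.
split.
- by move=> t _; rewrite CE EG; exact: DN_gnum.
- by move=> s t Hs Hst; rewrite !CE; split; lra.
- by rewrite CE.
- by rewrite tempE HN.
- split; last by rewrite HN.
  by move=> t _; rewrite CE /cval HN RL.
Qed.

Section NonNum.
Variable G : game.
Hypotheses (HG : DN G) (HN : ~~ is_num G)
  (IHL : forall g, memp g (leftopts G) -> Qgood g)
  (IHR : forall g, memp g (rightopts G) -> Qgood g).

Lemma NEL : leftopts G <> [::].
Proof. by move=> E; move: HN; rewrite (DN_termL HG E) /= eqxx. Qed.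
Lemma NER : rightopts G <> [::].
Proof. by move/(DN_dic HG); exact: NEL. Qed.

Let A t := Ls (tilde G t).
Let B t := Rs (tilde G t).

Lemma A_mono s t : 0 <= s -> s <= t -> A t <= A s /\ A s <= A t + (t - s).
Proof.
move=> Hs Hst; split.
  have [g [Hg Eg]] := A_ex t NEL.
  have [_ Q2 _ _ _] := IHL Hg; have [_ _ _ d] := Q2 s t Hs Hst.
  have := A_ge s Hg; rewrite /A Eg; lra.
have [g [Hg Eg]] := A_ex s NEL.
have [_ Q2 _ _ _] := IHL Hg; have [_ _ c _] := Q2 s t Hs Hst.
have := A_ge t Hg; rewrite /A Eg; lra.
Qed.

Lemma B_mono s t : 0 <= s -> s <= t -> B s <= B t /\ B t <= B s + (t - s).
Proof.
move=> Hs Hst; split.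
  have [g [Hg Eg]] := B_ex t NER.
  have [_ Q2 _ _ _] := IHR Hg; have [_ b _ _] := Q2 s t Hs Hst.
  have := B_le s Hg; rewrite /B Eg; lra.
have [g [Hg Eg]] := B_ex s NER.
have [_ Q2 _ _ _] := IHR Hg; have [a _ _ _] := Q2 s t Hs Hst.
have := B_le t Hg; rewrite /B Eg; lra.
Qed.

Lemma A0 : A 0 = Ls G.
Proof.
apply/eqP; rewrite eq_le; apply/andP; split.
  have [g [Hg Eg]] := A_ex 0 NEL.
  have [_ _ [_ E] _ _] := IHL Hg.
  by rewrite /A Eg E subr0; apply: Ls_ge.
have [g [Hg Eg]] := Ls_ex NEL.
have [_ _ [_ E] _ _] := IHL Hg.
by rewrite Eg -E -(subr0 (Rs (cool g 0))); apply: A_ge.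
Qed.

Lemma B0 : B 0 = Rs G.
Proof.
apply/eqP; rewrite eq_le; apply/andP; split; last first.
  have [g [Hg Eg]] := B_ex 0 NER.
  have [_ _ [E _] _ _] := IHR Hg.
  by rewrite /B Eg E addr0; apply: Rs_le.
have [g [Hg Eg]] := Rs_ex NER.
have [_ _ [E _] _ _] := IHR Hg.
by rewrite Eg -E -(addr0 (Ls (cool g 0))); apply: B_le.
Qed.

Lemma eventually_neg : exists t1, 0 <= t1 /\ A t1 - B t1 < 0.
Proof.
have [T [HT0 HT]] := freeze_list (leftopts G ++ rightopts G).
have FL : forall g t, memp g (leftopts G) -> T <= t -> cool g t = cool g T.
  move=> g t Hg Ht; rewrite !HT //; by apply/memp_cat; left.
have FR : forall g t, memp g (rightopts G) -> T <= t -> cool g t = cool g T.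
  move=> g t Hg Ht; rewrite !HT //; by apply/memp_cat; right.
pose t1 := T + `|A T - B T| + 1.
have Ht1 : T <= t1 by have := normr_ge0 (A T - B T); rewrite /t1; lra.
exists t1; split; first by rewrite /t1; have := normr_ge0 (A T - B T); lra.
have HA : A t1 <= A T - (t1 - T).
  have [g [Hg Eg]] := A_ex t1 NEL.
  have := A_ge T Hg; rewrite /A Eg (FL g t1 Hg Ht1); lra.
have HB : B T + (t1 - T) <= B t1.
  have [g [Hg Eg]] := B_ex t1 NER.
  have := B_le T Hg; rewrite /B Eg (FR g t1 Hg Ht1); lra.
have Et1 : t1 - T = `|A T - B T| + 1 by rewrite /t1; lra.
clearbody t1; have := ler_norm (A T - B T); lra.
Qed.

Lemma t0_facts : 0 <= t0 G /\ A (t0 G) = B (t0 G).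
Proof.
apply: (@threshold R A B).
- move=> s t Hs Hst; have := A_mono Hs Hst; have := B_mono Hs Hst; lra.
- move=> s t Hs Hst; have := A_mono Hs Hst; have := B_mono Hs Hst; lra.
- rewrite A0 B0 subr_ge0; exact: DN_nz.
- exact: eventually_neg.
Qed.

Lemma cvalE : cval G = A (t0 G).
Proof. by rewrite /cval (negbTE HN). Qed.

Lemma coolE' t : cool G t = if t <= t0 G then tilde G t else gnum (cval G).
Proof. by rewrite coolE (negbTE HN). Qed.

Lemma Qgood_nonnum : Qgood G.
Proof.
have [T0 EAB] := t0_facts.
have live : forall t, t <= t0 G -> cool G t = tilde G t by move=> t Ht; rewrite coolE' Ht.
have frozen : forall t, t0 G < t -> cool G t = gnum (cval G).
  by move=> t Ht; rewrite coolE' ifF //; apply/negbTE; rewrite -ltNge.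
split.
- move=> t Ht; case: (lerP t (t0 G)) => Htt; last by rewrite frozen //; exact: DN_gnum.
  rewrite live //; apply/DNE; split.
  + rewrite leftopts_tilde rightopts_tilde /nilp !size_map.
    by have [H _ _ _ _] := (DNE G).1 HG.
  + have := A_mono Ht Htt; have := B_mono Ht Htt; rewrite -/(A t) -/(B t); lra.
  + rewrite leftopts_tilde /nilp size_map.
    by case: (leftopts G) NEL.
  + rewrite leftopts_tilde => x /memp_map [g [Hg ->]]; apply: DN_shift.
    by have [Q1 _ _ _ _] := IHL Hg; apply: Q1.
  + rewrite rightopts_tilde => x /memp_map [g [Hg ->]]; apply: DN_shift.
    by have [Q1 _ _ _ _] := IHR Hg; apply: Q1.
- move=> s t Hs Hst; case: (lerP t (t0 G)) => Ht.
    have Hs0 : s <= t0 G by apply: le_trans Ht.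
    rewrite !live //; rewrite -/(A t) -/(A s) -/(B t) -/(B s).
    have := A_mono Hs Hst; have := B_mono Hs Hst; split; lra.
  case: (lerP s (t0 G)) => Hs0.
    rewrite (frozen t) // (live s) // -/(A s) -/(B s) /= cvalE.
    have := A_mono Hs Hs0; have := B_mono Hs Hs0; rewrite -/(A (t0 G)) in EAB *; split; lra.
  by rewrite !frozen //=; split; lra.
- rewrite live //; split; [exact: A0|exact: B0].
- by rewrite tempE (negbTE HN).
split => [t|_]; rewrite ?tempE ?(negbTE HN).
  move=> Ht; case: (lerP t (t0 G)) => Htt.
    have E : t = t0 G by apply/eqP; rewrite eq_le Htt Ht.
    by rewrite E live // cvalE -/(A (t0 G)) -/(B (t0 G)) EAB.
  by rewrite frozen.
move=> t Ht; split => g Hg.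
  have := A_ge t Hg; have := A_mono T0 Ht; rewrite cvalE -/(A t); lra.
have := B_le t Hg; have := B_mono T0 Ht; rewrite cvalE EAB -/(B t); lra.
Qed.

End NonNum.

Lemma Qgood_all G : DN G -> Qgood G.
Proof.
elim/game_ind_size: G => G IHL IHR HG.
case E: (is_num G); first exact: Qgood_num.
apply: Qgood_nonnum => //; first by rewrite E.
  by move=> g Hg; apply: IHL => //; apply: DN_L Hg.
by move=> g Hg; apply: IHR => //; apply: DN_R Hg.
Qed.

End Cool2.

Section CoolList.
Variable R : realType.
Notation game := (game R).
Implicit Types (G g h x y : game) (c a s t : R) (Hs Xs Ys P Q : seq game).
Local Notation shift := (@Defs.shift R).

Definition Cs t Hs := [seq cool h t | h <- Hs].

Lemma cool_cases h t : [\/ is_num h /\ cool h t = h,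
  [/\ ~~ is_num h, t <= t0 h & cool h t = tilde h t] |
  [/\ ~~ is_num h, t0 h < t & cool h t = gnum (cval h)]].
Proof.
rewrite coolE; case: (boolP (is_num h)) => HN; first by constructor 1.
case: (lerP t (t0 h)) => Ht; first by constructor 2.
by constructor 3.
Qed.

Lemma map_decomp (f : game -> game) Hs P x Q : [seq f h | h <- Hs] = P ++ x :: Q ->
  exists P0 h Q0, [/\ Hs = P0 ++ h :: Q0, P = [seq f h | h <- P0], x = f h & Q = [seq f h | h <- Q0]].
Proof.
elim: P Hs => [|y P IH] [|h Hs] //= [E1 E2].
  by exists [::], h, Hs.
have [P0 [h' [Q0 [E3 E4 E5 E6]]]] := IH _ E2.
by exists (h :: P0), h', Q0; rewrite E3 E4 -E1.
Qed.

Lemma memp_split x Xs : memp x Xs -> exists P Q, Xs = P ++ x :: Q.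
Proof.
elim: Xs => [//|y Xs IH] [->|/IH [P [Q ->]]]; first by exists [::], Xs.
by exists (y :: P), Q.
Qed.

Lemma LRs_front P x Q : LsL (P ++ x :: Q) = LsL (x :: P ++ Q) /\ RsL (P ++ x :: Q) = RsL (x :: P ++ Q).
Proof. exact: LRs_perm (gperm_mid P x Q). Qed.

Lemma LRs_shift_mid c P x Q : LsL (P ++ shift c x :: Q) = LsL (P ++ x :: Q) + c /\
  RsL (P ++ shift c x :: Q) = RsL (P ++ x :: Q) + c.
Proof.
have [E1 E2] := LRs_front P (shift c x) Q; have [E3 E4] := LRs_front P x Q.
by rewrite E1 E2 E3 E4; exact: LRsL_shift.
Qed.

Lemma LRs_gnum_mid a P Q : LsL (P ++ gnum a :: Q) = LsL (P ++ Q) + a /\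
  RsL (P ++ gnum a :: Q) = RsL (P ++ Q) + a.
Proof.
have [E1 E2] := LRs_front P (gnum a) Q.
by rewrite E1 E2; exact: LRsL_gnum.
Qed.

Lemma Cs_cat t P Q : Cs t (P ++ Q) = Cs t P ++ Cs t Q.
Proof. by rewrite /Cs map_cat. Qed.

Lemma allDN_Cs t Hs : 0 <= t -> allDN Hs -> allDN (Cs t Hs).
Proof.
move=> Ht HD x /memp_map [h [Hh ->]].
by have [Q1 _ _ _ _] := Qgood_all (HD h Hh); apply: Q1.
Qed.

Lemma live_stepL t Hs Y : allDN Hs -> step (@leftopts R) (Cs t Hs) Y ->
  exists Hs', step (@leftopts R) Hs Hs' /\ RsL Y = RsL (Cs t Hs') - t.
Proof.
move=> HD S; have [P [x [x' [Q [E1 E2 Hx']]]]] := step_decomp S.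
have [P0 [h [Q0 [EH EP Ex EQ]]]] := map_decomp E1.
subst x Y P Q; case: (cool_cases h t) => [[HN E]|[HN Ht E]|[HN Ht E]]; rewrite E in Hx'.
- by move: Hx'; rewrite (is_numE HN).
- move: Hx'; rewrite leftopts_tilde => /memp_map [g [Hg ->]].
  exists (P0 ++ g :: Q0); split; first by rewrite EH; apply: step_mid.
  by rewrite (proj2 (LRs_shift_mid _ _ _ _)) Cs_cat.
- by move: Hx'.
Qed.

Lemma live_stepR t Hs Y : allDN Hs -> step (@rightopts R) (Cs t Hs) Y ->
  exists Hs', step (@rightopts R) Hs Hs' /\ LsL Y = LsL (Cs t Hs') + t.
Proof.
move=> HD S; have [P [x [x' [Q [E1 E2 Hx']]]]] := step_decomp S.
have [P0 [h [Q0 [EH EP Ex EQ]]]] := map_decomp E1.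
subst x Y P Q; case: (cool_cases h t) => [[HN E]|[HN Ht E]|[HN Ht E]]; rewrite E in Hx'.
- by move: Hx'; rewrite (is_numE HN).
- move: Hx'; rewrite rightopts_tilde => /memp_map [g [Hg ->]].
  exists (P0 ++ g :: Q0); split; first by rewrite EH; apply: step_mid.
  by rewrite (proj1 (LRs_shift_mid _ _ _ _)) Cs_cat.
- by move: Hx'.
Qed.

Lemma stepL_bound t Hs Hs' : 0 <= t -> allDN Hs -> step (@leftopts R) Hs Hs' ->
  RsL (Cs t Hs') <= LsL (Cs t Hs) + t.
Proof.
move=> Ht0 HD S; have [P0 [h [g [Q0 [EH EH' Hg]]]]] := step_decomp S.
subst Hs Hs'; have Dh : DN h by apply: HD; apply/memp_cat; right; left.
have [P1 P2] := (allDN_cat _ _).1 HD; have [_ DQ0] := (allDN_cons _ _).1 P2.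
rewrite !Cs_cat /=.
case: (cool_cases h t) => [[HN E]|[HN Ht E]|[HN Ht E]].
- by move: Hg; rewrite (is_numE HN).
- rewrite E; have S' : step (@leftopts R) (Cs t P0 ++ tilde h t :: Cs t Q0)
     (Cs t P0 ++ shift (- t) (cool g t) :: Cs t Q0).
    by apply: step_mid; rewrite leftopts_tilde; exact: (memp_mapI (fun g => shift (- t) (cool g t))).
  have := LsL_ge S'; rewrite (proj2 (LRs_shift_mid _ _ _ _)); lra.
- rewrite E (proj1 (LRs_gnum_mid _ _ _)) (proj2 (LRs_front _ _ _)).
  have [_ _ _ _ [_ K]] := Qgood_all Dh.
  have Kg := (K HN t (ltW Ht)).1 g Hg.
  have DC : allDN (Cs t (P0 ++ Q0)) by apply: allDN_Cs => //; apply/allDN_cat.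
  have Dg : allDN [:: cool g t].
    move=> x [<-|//]; have [Q1 _ _ _ _] := Qgood_all (DN_L Dh Hg); exact: Q1.
  have [_ _ J3 _] := J Dg DC; rewrite Cs_cat in J3 DC *.
  move: J3; rewrite /LsL /RsL /= => J3; lra.
Qed.

Lemma stepR_bound t Hs Hs' : 0 <= t -> allDN Hs -> step (@rightopts R) Hs Hs' ->
  RsL (Cs t Hs) - t <= LsL (Cs t Hs').
Proof.
move=> Ht0 HD S; have [P0 [h [g [Q0 [EH EH' Hg]]]]] := step_decomp S.
subst Hs Hs'; have Dh : DN h by apply: HD; apply/memp_cat; right; left.
have [P1 P2] := (allDN_cat _ _).1 HD; have [_ DQ0] := (allDN_cons _ _).1 P2.
rewrite !Cs_cat /=.
case: (cool_cases h t) => [[HN E]|[HN Ht E]|[HN Ht E]].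
- by move: Hg; rewrite (is_numE HN).
- rewrite E; have S' : step (@rightopts R) (Cs t P0 ++ tilde h t :: Cs t Q0)
     (Cs t P0 ++ shift t (cool g t) :: Cs t Q0).
    by apply: step_mid; rewrite rightopts_tilde; exact: (memp_mapI (fun g => shift t (cool g t))).
  have := RsL_le S'; rewrite (proj1 (LRs_shift_mid _ _ _ _)); lra.
- rewrite E (proj2 (LRs_gnum_mid _ _ _)) (proj1 (LRs_front _ _ _)).
  have [_ _ _ _ [_ K]] := Qgood_all Dh.
  have Kg := (K HN t (ltW Ht)).2 g Hg.
  have DC : allDN (Cs t (P0 ++ Q0)) by apply: allDN_Cs => //; apply/allDN_cat.
  have Dg : allDN [:: cool g t].
    move=> x [<-|//]; have [Q1 _ _ _ _] := Qgood_all (DN_R Dh Hg); exact: Q1.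
  have [J1 _ _ _] := J Dg DC; rewrite Cs_cat in J1 DC *.
  move: J1; rewrite /LsL /RsL /= => J1; lra.
Qed.

Lemma Cs_term t Hs : allDN Hs -> termL Hs -> Cs t Hs = Hs.
Proof.
elim: Hs => [//|h Hs IH] HD HT /=.
have [Dh DHs] := (allDN_cons _ _).1 HD.
have HN : is_num h by rewrite (DN_termL Dh (HT h (or_introl erefl))) /= eqxx.
by rewrite coolE HN IH // => x Hx; apply: HT; right.
Qed.

Lemma sumRs_ge Xs : allDN Xs -> \sum_(x <- Xs) Rs x <= RsL Xs.
Proof.
elim: Xs => [|x Xs IH] HD; first by rewrite big_nil /RsL.
have [Dx DXs] := (allDN_cons _ _).1 HD.
have Dx1 : allDN [:: x] by move=> y [<-|//].
have [_ J2 _ _] := J Dx1 DXs; move: J2; rewrite big_cons /RsL /= => J2.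
have := IH DXs; rewrite /RsL; lra.
Qed.

Lemma sumLs_ge Xs : allDN Xs -> LsL Xs <= \sum_(x <- Xs) Ls x.
Proof.
elim: Xs => [|x Xs IH] HD; first by rewrite big_nil /LsL.
have [Dx DXs] := (allDN_cons _ _).1 HD.
have Dx1 : allDN [:: x] by move=> y [<-|//].
have [_ _ _ J4] := J Dx1 DXs; move: J4; rewrite big_cons /LsL /= => J4.
have := IH DXs; rewrite /LsL; lra.
Qed.

Lemma sumLs_le Xs : allDN Xs -> (forall x, memp x Xs -> Ls x = Rs x) -> \sum_(x <- Xs) Ls x <= LsL Xs.
Proof.
case: Xs => [|x Xs] HD HE; first by rewrite big_nil /LsL.
have [Dx DXs] := (allDN_cons _ _).1 HD.
have Dx1 : allDN [:: x] by move=> y [<-|//].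
have [J1 _ _ _] := J Dx1 DXs; move: J1; rewrite big_cons /LsL /= => J1.
have := sumRs_ge DXs.
have E : \sum_(y <- Xs) Ls y = \sum_(y <- Xs) Rs y by apply: eq_big_memp => y Hy; apply: HE; right.
rewrite /RsL; lra.
Qed.

Lemma sumRs_le Xs : allDN Xs -> (forall x, memp x Xs -> Ls x = Rs x) -> RsL Xs <= \sum_(x <- Xs) Rs x.
Proof.
case: Xs => [|x Xs] HD HE; first by rewrite big_nil /RsL.
have [Dx DXs] := (allDN_cons _ _).1 HD.
have Dx1 : allDN [:: x] by move=> y [<-|//].
have [_ _ J3 _] := J Dx1 DXs; move: J3; rewrite big_cons /RsL /= => J3.
have := sumLs_ge DXs.
have E : \sum_(y <- Xs) Ls y = \sum_(y <- Xs) Rs y by apply: eq_big_memp => y Hy; apply: HE; right.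
have E1 := HE x (or_introl erefl).
rewrite /LsL; lra.
Qed.

Lemma argmax (P : game -> Prop) (f : game -> R) (s : seq game) : (exists h, memp h s /\ P h) ->
  exists h, [/\ memp h s, P h & forall h', memp h' s -> P h' -> f h' <= f h].
Proof.
elim: s => [[h [//]]|y s IH] [h [Hh Ph]].
case: (EM (exists h, memp h s /\ P h)) => [Ex|NEx].
  have [m [Hm Pm Mm]] := IH Ex.
  case: (EM (P y)) => Py.
    case: (lerP (f y) (f m)) => Hym.
      by exists m; split; [right| |move=> h' [<-|/Mm]].
    exists y; split => //; [left|move=> h' [<-//|Hh' Ph']]; first by [].
    by apply: le_trans (Mm _ Hh' Ph') (ltW Hym).
  by exists m; split; [right| |move=> h' [<-//|/Mm]].
have Py : P y.
  case: Hh => [-> //|Hh]; exfalso; apply: NEx; by exists h.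
exists y; split => //; [left|move=> h' [<-//|Hh' Ph']]; first by [].
by exfalso; apply: NEx; exists h'.
Qed.

Definition Claims t Hs := [/\ LsL (Cs t Hs) <= LsL Hs, LsL Hs <= LsL (Cs t Hs) + t,
  RsL Hs <= RsL (Cs t Hs) & RsL (Cs t Hs) - t <= RsL Hs].

Lemma live_i t Hs Y0 :
  (forall Hs', step (@leftopts R) Hs Hs' -> forall t, 0 <= t -> Claims t Hs') ->
  allDN Hs -> 0 <= t -> step (@leftopts R) (Cs t Hs) Y0 -> LsL (Cs t Hs) <= LsL Hs.
Proof.
move=> IH HD Ht S0; have [Y [S E]] := LsL_ex S0.
have [Hs' [S' E']] := live_stepL HD S.
have [_ _ _ C4] := IH _ S' t Ht.
have := LsL_ge S'; lra.
Qed.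

Lemma live_iii t Hs Y0 :
  (forall Hs', step (@rightopts R) Hs Hs' -> forall t, 0 <= t -> Claims t Hs') ->
  allDN Hs -> 0 <= t -> step (@rightopts R) (Cs t Hs) Y0 -> RsL Hs <= RsL (Cs t Hs).
Proof.
move=> IH HD Ht S0; have [Y [S E]] := RsL_ex S0.
have [Hs' [S' E']] := live_stepR HD S.
have [_ C2 _ _] := IH _ S' t Ht.
have := RsL_le S'; lra.
Qed.

Lemma terminal_tempL t h : DN h -> 0 <= t -> leftopts (cool h t) = [::] -> temperature h <= t.
Proof.
move=> Dh Ht; rewrite tempE; case: (cool_cases h t) => [[HN E]|[HN Ht' E]|[HN Ht' E]].
- by rewrite HN.
- by rewrite E leftopts_tilde; case: (leftopts h) (NEL Dh HN).
- by rewrite (negbTE HN) (ltW Ht').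
Qed.

Lemma terminal_tempR t h : DN h -> 0 <= t -> rightopts (cool h t) = [::] -> temperature h <= t.
Proof.
move=> Dh Ht; rewrite tempE; case: (cool_cases h t) => [[HN E]|[HN Ht' E]|[HN Ht' E]].
- by rewrite HN.
- by rewrite E rightopts_tilde; case: (rightopts h) (NER Dh HN).
- by rewrite (negbTE HN) (ltW Ht').
Qed.

Lemma step_nonnum o Hs Hs' : (forall a, o (gnum a) = [::]) -> step o Hs Hs' ->
  exists h, memp h Hs /\ ~~ is_num h.
Proof.
move=> Ho S; have [P [h [h' [Q [E1 _ Hh']]]]] := step_decomp S.
exists h; split; first by rewrite E1; apply/memp_cat; right; left.
by apply/negP => HN; move: Hh'; rewrite (is_numE HN) Ho.
Qed.

Lemma frozen_setup Hs : allDN Hs -> (exists h, memp h Hs /\ ~~ is_num h) ->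
  exists t', [/\ 0 <= t', (forall h, memp h Hs -> temperature h <= t'),
    (exists Y, step (@leftopts R) (Cs t' Hs) Y) & (exists Y, step (@rightopts R) (Cs t' Hs) Y)].
Proof.
move=> HD Ex.
have [m [Hm Pm Mm]] := argmax (@t0 R) Ex.
have Dm := HD m Hm.
have [_ _ _ Tm _] := Qgood_all Dm; rewrite tempE (negbTE Pm) in Tm.
have [P [Q EH]] := memp_split Hm.
have Em : cool m (t0 m) = tilde m (t0 m).
  case: (cool_cases m (t0 m)) => [[HN _]|[_ _ ->]//|[_ Hlt _]].
    by move: Pm; rewrite HN.
  by move: Hlt; rewrite ltxx.
exists (t0 m); split => //.
- move=> h Hh; rewrite tempE; case: ifP => HN //.
  by apply: Mm => //; rewrite HN.
- rewrite EH Cs_cat /= Em.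
  case E: (leftopts m) (NEL Dm Pm) => [//|z zs] _.
  exists (Cs (t0 m) P ++ shift (- t0 m) (cool z (t0 m)) :: Cs (t0 m) Q); apply: step_mid.
  by rewrite leftopts_tilde E; left.
- rewrite EH Cs_cat /= Em.
  case E: (rightopts m) (NER Dm Pm) => [//|z zs] _.
  exists (Cs (t0 m) P ++ shift (t0 m) (cool z (t0 m)) :: Cs (t0 m) Q); apply: step_mid.
  by rewrite rightopts_tilde E; left.
Qed.

Lemma cool_cval h t : DN h -> temperature h <= t -> Ls (cool h t) = cval h /\ Rs (cool h t) = cval h.
Proof. by move=> Dh Ht; have [_ _ _ _ [H _]] := Qgood_all Dh; apply: H. Qed.

Lemma claims_all n : forall Hs, (lsize Hs < n)%N -> allDN Hs -> forall t, 0 <= t -> Claims t Hs.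
Proof.
elim: n => [//|n IH] Hs Hn HD.
have IHL : forall Hs', step (@leftopts R) Hs Hs' -> forall t, 0 <= t -> Claims t Hs'.
  move=> Hs' S; apply: IH; last exact: allDN_stepL S.
  by move: (stepL_lsize S) Hn; lia.
have IHR : forall Hs', step (@rightopts R) Hs Hs' -> forall t, 0 <= t -> Claims t Hs'.
  move=> Hs' S; apply: IH; last exact: allDN_stepR S.
  by move: (stepR_lsize S) Hn; lia.
move=> t Ht; split.
- case: (step_dec (@leftopts R) (Cs t Hs)) => [HT|[Y0 S0]]; last exact: live_i S0.
  case: (step_dec (@leftopts R) Hs) => [HT'|[Y1 S1]]; first by rewrite Cs_term.
  have [t' [Ht' Tt' [Y2 S2] _]] := frozen_setup HD (step_nonnum (fun a => erefl) S1).
  apply: le_trans (live_i IHL HD Ht' S2).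
  have Hterm : forall h, memp h Hs -> temperature h <= t.
    move=> h Hh; apply: terminal_tempL (HD h Hh) Ht _; apply: HT.
    exact: (memp_mapI (fun h => cool h t)).
  rewrite (sumL_term HT) /Cs big_map.
  have LR : forall x, memp x (Cs t' Hs) -> Ls x = Rs x.
    move=> x /memp_map [h [Hh ->]].
    by have [-> ->] := cool_cval (HD h Hh) (Tt' h Hh).
  apply: le_trans (sumLs_le (allDN_Cs Ht' HD) LR).
  rewrite big_map le_eqVlt; apply/orP; left; apply/eqP; apply: eq_big_memp => h Hh.
  by rewrite (proj1 (cool_cval (HD h Hh) (Hterm h Hh))) (proj1 (cool_cval (HD h Hh) (Tt' h Hh))).
- case: (step_dec (@leftopts R) Hs) => [HT|[Y0 S0]]; first by rewrite Cs_term //; lra.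
  have [Hs' [S E]] := LsL_ex S0.
  have [_ _ C3 _] := IHL _ S t Ht.
  have := stepL_bound Ht HD S; lra.
- case: (step_dec (@rightopts R) (Cs t Hs)) => [HT|[Y0 S0]]; last exact: live_iii S0.
  case: (step_dec (@rightopts R) Hs) => [HT'|[Y1 S1]]; first by rewrite (Cs_term _ HD (termRL HD HT')).
  have [t' [Ht' Tt' _ [Y2 S2]]] := frozen_setup HD (step_nonnum (fun a => erefl) S1).
  apply: le_trans (live_iii IHR HD Ht' S2) _.
  have Hterm : forall h, memp h Hs -> temperature h <= t.
    move=> h Hh; apply: terminal_tempR (HD h Hh) Ht _; apply: HT.
    exact: (memp_mapI (fun h => cool h t)).
  rewrite (sumR_term HT) /Cs big_map.
  have LR : forall x, memp x (Cs t' Hs) -> Ls x = Rs x.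
    move=> x /memp_map [h [Hh ->]].
    by have [-> ->] := cool_cval (HD h Hh) (Tt' h Hh).
  apply: le_trans (sumRs_le (allDN_Cs Ht' HD) LR) _.
  rewrite big_map le_eqVlt; apply/orP; left; apply/eqP; apply: eq_big_memp => h Hh.
  by rewrite (proj2 (cool_cval (HD h Hh) (Hterm h Hh))) (proj2 (cool_cval (HD h Hh) (Tt' h Hh))).
- case: (step_dec (@rightopts R) Hs) => [HT|[Y0 S0]]; first by rewrite (Cs_term _ HD (termRL HD HT)); lra.
  have [Hs' [S E]] := RsL_ex S0.
  have [C1 _ _ _] := IHR _ S t Ht.
  have := stepR_bound Ht HD S; lra.
Qed.

Lemma claims Hs t : allDN Hs -> 0 <= t -> Claims t Hs.
Proof. by move=> HD Ht; apply: (claims_all (n := (lsize Hs).+1)). Qed.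

End CoolList.

Section Final.
Import numFieldNormedType.Exports.
Local Open Scope classical_set_scope.
Variable R : realType.
Notation game := (game R).
Implicit Types (G g h x y : game) (c a s t : R) (Hs Xs Ys P Q : seq game).

Lemma cool_frozen h t : temperature h < t -> cool h t = gnum (cval h).
Proof.
rewrite tempE coolE /cval; case: ifP => HN Ht; first exact: is_numE.
by rewrite ifF //; apply/negbTE; rewrite -ltNge.
Qed.

Lemma final_bounds Hs t : allDN Hs -> 0 <= t -> (forall h, memp h Hs -> temperature h < t) ->
  let m := \sum_(h <- Hs) cval h in
  [/\ m <= LsL Hs, LsL Hs <= m + t, RsL Hs <= m & m - t <= RsL Hs].
Proof.
move=> HD Ht HT m.
have E : Cs t Hs = [seq gnum (cval h) | h <- Hs].
  by rewrite /Cs; apply: eq_map_memp => h Hh; apply: cool_frozen; apply: HT.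
have TL : termL (Cs t Hs) by rewrite E => x /memp_map [h [_ ->]].
have TR : termR (Cs t Hs) by rewrite E => x /memp_map [h [_ ->]].
have EL : LsL (Cs t Hs) = m by rewrite (sumL_term TL) E big_map.
have ER : RsL (Cs t Hs) = m by rewrite (sumR_term TR) E big_map.
have [C1 C2 C3 C4] := claims HD Ht.
by rewrite -EL; split => //; rewrite -?ER // EL -ER.
Qed.

Lemma gmul_sum n g : gmul n g = sum_games (nseq n g).
Proof.
elim: n => [|n IH] //; case: n IH => [|n] IH //.
have -> : gmul n.+2 g = gsum g (gmul n.+1 g) by [].
have -> : sum_games (nseq n.+2 g) = gsum g (sum_games (nseq n.+1 g)) by [].
by rewrite IH.
Qed.

Lemma sum_nseq (F : game -> R) n g : \sum_(h <- nseq n g) F h = F g *+ n.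
Proof. by elim: n => [|n IH]; rewrite ?big_nil ?big_cons ?IH ?mulrS. Qed.

Lemma mean_cval g : DN g -> mean g = cval g.
Proof.
move=> Dg; pose t := temperature g + 1.
have [_ _ _ T0 _] := Qgood_all Dg.
have Ht : 0 < t by rewrite /t; lra.
have bnd : forall n, (cval g) *+ n <= Ls (gmul n g) /\ Ls (gmul n g) <= (cval g) *+ n + t.
  move=> n; have HD : allDN (nseq n g).
    by elim: (n) => [|k IH] //= x [<-|/IH].
  have HT : forall h, memp h (nseq n g) -> temperature h < t.
    move=> h; elim: (n) => [|k IH] //= [<-|/IH //]; rewrite /t ltrDl; lra.
  have [B1 B2 _ _] := final_bounds HD (ltW Ht) HT.
  by rewrite gmul_sum -(sum_nseq (@cval R)); split.
rewrite /mean; apply: (cvg_lim (@Rhausdorff R)); apply/cvgrPdist_le => e He.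
apply: filterS (nbhs_infty_ger (t / e)) => n Hn.
have Hn0 : 0 < (n%:R : R) by apply: lt_le_trans Hn; apply: divr_gt0.
have Hte : t <= n%:R * e by rewrite -ler_pdivrMr.
have [B1 B2] := bnd n.
rewrite -mulr_natr in B1 B2.
rewrite distrC ler_distl; apply/andP; split.
  by rewrite ler_pdivlMr //; have := mulr_ge0 (ltW He) (ltW Hn0); nra.
by rewrite ler_pdivrMr //; nra.
Qed.

End Final.

Section Main.
Variable R : realType.
Notation game := (game R).

Lemma memp_nth (x : game) (s : seq game) : memp x s ->
  exists i, (i < size s)%N /\ nth (gnum 0) s i = x.
Proof.
elim: s => [//|y s IH] [<-|/IH [i [Hi E]]]; first by exists 0%N.
by exists i.+1.
Qed.

Lemma sigma_facts (Gs : seq game) :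
  0 <= \big[Num.max/(0 : R)]_(g <- Gs) temperature g /\
  forall g, memp g Gs -> temperature g <= \big[Num.max/(0 : R)]_(g <- Gs) temperature g.
Proof.
elim: Gs => [|y s [IH1 IH2]]; first by rewrite big_nil.
rewrite big_cons; split; first by rewrite le_max IH1 orbT.
move=> g [<-|Hg]; first by rewrite le_max lexx.
by rewrite le_max IH2 ?orbT.
Qed.

End Main.

Theorem mainTheorem6 (R : realType) (Gs : seq (game R)) :
  Gs <> [::] ->
  (forall i, (i < size Gs)%N ->
     let g := nth (gnum (0 : R)) Gs i in dicotic g /\ nonzugzwang g /\ terminal_numbers g) ->
  let G := sum_games Gs in
  let m := \sum_(g <- Gs) mean g in
  let sigma := \big[Num.max/(0 : R)]_(g <- Gs) temperature g in
  m - sigma <= Rs G /\ Rs G <= m /\ m <= Ls G /\ Ls G <= m + sigma.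
Proof.
move=> _ H G m sigma.
have HD : allDN Gs.
  by move=> x Hx; have [i [Hi E]] := memp_nth Hx; have := H i Hi; rewrite /= E.
have Em : m = \sum_(g <- Gs) cval g.
  by rewrite /m; apply: eq_big_memp => g Hg; apply: mean_cval; apply: HD.
have [S0 S1] := sigma_facts Gs; rewrite -/sigma in S0 S1.
have FB : forall e, 0 < e -> [/\ m <= Ls G, Ls G <= m + (sigma + e), Rs G <= m & m - (sigma + e) <= Rs G].
  move=> e He; rewrite Em.
  have Ht : 0 <= sigma + e by lra.
  have HT : forall h, memp h Gs -> temperature h < sigma + e.
    by move=> h Hh; have := S1 h Hh; lra.
  exact: final_bounds HD Ht HT.
have [F1 _ F3 _] := FB 1 ltr01.
split; first by apply/ler_addgt0Pr => e He; have [_ _ _ F4] := FB e He; lra.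
split => //; split => //.
by apply/ler_addgt0Pr => e He; have [_ F2 _ _] := FB e He; lra.
Qed.
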